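(* The composition $\mathcal F\circ\mathcal I$ is the identity map on $\mathcal F_\mathbb Z$.
   Context: Let $S_\mathbb Z$ be the group of finitely supported permutations of $\mathbb Z$. Let $\mathcal I_\mathbb Z=\{w\in S_\mathbb Z:w=w^{-1}\}$. Let $\Theta(i)=i-(-1)^i$ and $\mathcal F_\mathbb Z=\{w^{-1}\Theta w:w\in S_\mathbb Z\}$. For $y\in\mathcal I_\mathbb Z$, choose any even integer $m$ smaller than every element of $\mathrm{supp}(y)=\{i:y(i)\ne i\}$. Let $\phi:\mathbb Z\to\mathbb Z\setminus\mathrm{supp}(y)$ be the order-preserving bijection with $\phi(0)=m$. Define $\mathcal F(y)$ to be the unique element of $\mathcal F_\mathbb Z$ with $\mathcal F(y)(i)=y(i)$ for $i\in\mathrm{supp}(y)$ and $\mathcal F(y)\circ\phi=\phi\circ\Theta$. For $z\in\mathcal F_\mathbb Z$, let $\mathcal I(z)\in\mathcal I_\mathbb Z$ be the involution whose nontrivial cycles are exactly the cycles $(p,q)$ of $z$ with $p<q$ for which some cycle $(a,b)$ of $z$ with $a<b$ satisfies $p<b<q$. *)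

(* Defs.v *)
From Stdlib Require Import ZArith List.
Import ListNotations.
Open Scope Z_scope.

Definition fin_supp (w : Z -> Z) : Prop :=
  exists N : Z, forall i, N < Z.abs i -> w i = i.

Definition inverse_of (w winv : Z -> Z) : Prop :=
  (forall i, winv (w i) = i) /\ (forall i, w (winv i) = i).

Definition in_S_Z (w : Z -> Z) : Prop :=
  (exists winv, inverse_of w winv) /\ fin_supp w.

Definition in_I_Z (y : Z -> Z) : Prop :=
  in_S_Z y /\ forall i, y (y i) = i.

(* Theta(i) = i - (-1)^i *)
Definition Theta (i : Z) : Z := if Z.even i then i - 1 else i + 1.

Definition in_F_Z (z : Z -> Z) : Prop :=
  exists w winv, in_S_Z w /\ inverse_of w winv /\
    forall i, z i = winv (Theta (w i)).

(* b ranges over p+1, ..., q-1; test whether some b has z b < b,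
   i.e. (z b, b) is a cycle (a,b) of z with a < b and p < b < q *)
Definition crossing (z : Z -> Z) (p q : Z) : bool :=
  existsb (fun k => let b := p + 1 + Z.of_nat k in Z.ltb (z b) b)
          (seq 0 (Z.to_nat (q - p - 1))).

(* The map I : F_Z -> I_Z.  The point i lies in the cycle (p,q) of z with
   p = min(i, z i), q = max(i, z i); it is kept iff that cycle satisfies
   the condition, otherwise i is fixed. *)
Definition I_map (z : Z -> Z) (i : Z) : Z :=
  if crossing z (Z.min i (z i)) (Z.max i (z i)) then z i else i.

(* Admissible data (m, phi) in the definition of F(y):
   m even, smaller than every element of supp(y);
   phi : Z -> Z \ supp(y) an order-preserving bijection with phi 0 = m. *)
Definition F_data (y : Z -> Z) (m : Z) (phi : Z -> Z) : Prop :=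
  Z.even m = true /\
  (forall i, y i <> i -> m < i) /\
  (forall i j, i < j -> phi i < phi j) /\
  (forall i, y (phi i) = phi i) /\
  (forall j, y j = j -> exists i, phi i = j) /\
  phi 0 = m.

Definition F_spec (y : Z -> Z) (phi : Z -> Z) (z : Z -> Z) : Prop :=
  in_F_Z z /\
  (forall i, y i <> i -> z i = y i) /\
  (forall i, z (phi i) = phi (Theta i)).

(* Main.v *)
Require Import Defs.
From Stdlib Require Import ZArith Lia List FunctionalExtensionality.
Import ListNotations.
Open Scope Z_scope.

Lemma crossing_spec z p q :
  crossing z p q = true <-> exists b, p < b < q /\ z b < b.
Proof.
  unfold crossing. rewrite existsb_exists. split.
  - intros [k [Hk Hb]]. apply in_seq in Hk. apply Z.ltb_lt in Hb.
    exists (p + 1 + Z.of_nat k). split; [lia|exact Hb].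
  - intros [b [Hb Hz]]. exists (Z.to_nat (b - p - 1)). split.
    + apply in_seq. lia.
    + rewrite Z2Nat.id by lia. replace (p + 1 + (b-p-1)) with b by ring.
      apply Z.ltb_lt; exact Hz.
Qed.

Lemma even_pred' i : Z.even (i-1) = negb (Z.even i).
Proof. replace (i-1) with (Z.pred i) by lia. rewrite Z.even_pred, <- Z.negb_even. reflexivity. Qed.
Lemma even_succ' i : Z.even (i+1) = negb (Z.even i).
Proof. replace (i+1) with (Z.succ i) by lia. rewrite Z.even_succ, <- Z.negb_even. reflexivity. Qed.

Lemma Theta_even x : Z.even x = true -> Theta x = x - 1.
Proof. unfold Theta; intros ->; reflexivity. Qed.
Lemma Theta_odd x : Z.even x = false -> Theta x = x + 1.
Proof. unfold Theta; intros ->; reflexivity. Qed.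

Lemma Theta_inv x : Theta (Theta x) = x.
Proof.
  destruct (Z.even x) eqn:E.
  - rewrite (Theta_even x E), Theta_odd; [lia|]. rewrite even_pred', E; reflexivity.
  - rewrite (Theta_odd x E), Theta_even; [lia|]. rewrite even_succ', E; reflexivity.
Qed.

Lemma Theta_neq x : Theta x <> x.
Proof. unfold Theta; destruct (Z.even x); lia. Qed.

Lemma F_inv z : in_F_Z z -> forall i, z (z i) = i.
Proof.
  intros [w [winv [_ [[H1 H2] Hz]]]] i.
  rewrite (Hz (z i)), (Hz i), H2, Theta_inv, H1. reflexivity.
Qed.

Lemma F_nofix z : in_F_Z z -> forall i, z i <> i.
Proof.
  intros [w [winv [_ [[H1 H2] Hz]]]] i E. rewrite Hz in E.
  apply (f_equal w) in E. rewrite H2 in E. exact (Theta_neq _ E).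
Qed.

Lemma F_far z : in_F_Z z -> exists N, forall i, N < Z.abs i -> z i = Theta i.
Proof.
  intros [w [winv [[_ [N HN]] [[H1 H2] Hz]]]].
  assert (Hinv : forall i, N < Z.abs i -> winv i = i).
  { intros i Hi. destruct (Z_lt_le_dec N (Z.abs (winv i))) as [Hj|Hj].
    - pose proof (HN _ Hj) as E. rewrite H2 in E. auto.
    - pose proof (HN _ Hi) as E. rewrite <- (H1 i), E at 1.
      exfalso. assert (winv i = i) as E2.
      { rewrite <- E at 1. apply H1. }
      rewrite E2 in Hj. lia. }
  exists (N + 1). intros i Hi. rewrite Hz, HN by lia. apply Hinv.
  unfold Theta; destruct (Z.even i); lia.
Qed.

Lemma phi_le (phi : Z -> Z) : (forall i j, i < j -> phi i < phi j) ->
  forall i j, i <= j -> phi i <= phi j.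
Proof. intros H i j Hij. destruct (Z.eq_dec i j); [subst; lia|]. pose proof (H i j); lia. Qed.

Lemma phi_rev (phi : Z -> Z) : (forall i j, i < j -> phi i < phi j) ->
  forall i j, phi i < phi j -> i < j.
Proof. intros H i j Hij. destruct (Z_lt_le_dec i j); auto. pose proof (phi_le phi H j i); lia. Qed.

Lemma phi_inj (phi : Z -> Z) : (forall i j, i < j -> phi i < phi j) ->
  forall i j, phi i = phi j -> i = j.
Proof. intros H i j E. destruct (Z.lt_total i j) as [h|[h|h]]; auto;
  pose proof (H _ _ h); lia. Qed.

Lemma phi_neg y m phi : F_data y m phi -> forall n : nat, phi (- Z.of_nat n) = m - Z.of_nat n.
Proof.
  intros [Hm [Hsupp [Hmono [Hfix [Hsurj H0]]]]] n. induction n.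
  - simpl. rewrite H0. lia.
  - rewrite Nat2Z.inj_succ.
    assert (Hk : y (m - Z.of_nat n - 1) = m - Z.of_nat n - 1).
    { destruct (Z.eq_dec (y (m - Z.of_nat n - 1)) (m - Z.of_nat n - 1)); auto.
      apply Hsupp in n0. lia. }
    destruct (Hsurj _ Hk) as [j Hj].
    pose proof (Hmono (- Z.succ (Z.of_nat n)) (- Z.of_nat n) ltac:(lia)).
    assert (j < - Z.of_nat n) by (apply (phi_rev phi Hmono); lia).
    pose proof (phi_le phi Hmono j (- Z.succ (Z.of_nat n)) ltac:(lia)). lia.
Qed.

Lemma step z m phi : in_F_Z z -> F_data (I_map z) m phi ->
  forall i, z (phi i) = phi (i-1) \/ z (phi i) = phi (i+1).
Proof.
  intros HF HD. destruct HD as [Hm [Hsupp [Hmono [Hfix [Hsurj H0]]]]]. intros i.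
  remember (phi i) as f eqn:Ef.
  assert (Hyf : I_map z f = f) by (rewrite Ef; apply Hfix).
  assert (Hcr : crossing z (Z.min f (z f)) (Z.max f (z f)) = false).
  { unfold I_map in Hyf. destruct crossing; auto. exfalso; exact (F_nofix z HF f Hyf). }
  assert (Hyf' : I_map z (z f) = z f).
  { unfold I_map. rewrite (F_inv z HF), Z.min_comm, Z.max_comm, Hcr. reflexivity. }
  destruct (Hsurj _ Hyf') as [j Hj].
  assert (Hzq : z (Z.max f (z f)) = Z.min f (z f)).
  { destruct (Z.le_gt_cases f (z f)).
    - rewrite Z.max_r, Z.min_l by lia. apply (F_inv z HF).
    - rewrite Z.max_l, Z.min_r by lia. reflexivity. }
  assert (Hnc : forall b, Z.min f (z f) < b < Z.max f (z f) -> b < z b).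
  { intros b Hb. destruct (Z_lt_le_dec b (z b)); auto.
    assert (z b <> b) by apply (F_nofix z HF).
    assert (crossing z (Z.min f (z f)) (Z.max f (z f)) = true).
    { apply crossing_spec. exists b. split; [auto|lia]. }
    congruence. }
  assert (Hnb : forall c, Z.min f (z f) < c < Z.max f (z f) -> I_map z c <> c).
  { intros c Hc Hyc. pose proof (Hnc c Hc) as Hc'.
    destruct (Z.lt_total (z c) (Z.max f (z f))) as [h|[h|h]].
    - pose proof (Hnc (z c) ltac:(lia)). rewrite (F_inv z HF) in H. lia.
    - assert (c = Z.min f (z f)) by (rewrite <- Hzq, <- h; symmetry; apply (F_inv z HF)). lia.
    - assert (crossing z (Z.min c (z c)) (Z.max c (z c)) = true).
      { apply crossing_spec. exists (Z.max f (z f)). split; [lia|]. rewrite Hzq. lia. }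
      unfold I_map in Hyc. rewrite H in Hyc. exact (F_nofix z HF c Hyc). }
  assert (j <> i) by (intro E; rewrite E in Hj; apply (F_nofix z HF f); congruence).
  destruct (Z.lt_total j i) as [h|[h|h]]; [|congruence|].
  - destruct (Z.eq_dec j (i-1)); [left; subst; auto|].
    exfalso. pose proof (Hmono j (i-1) ltac:(lia)). pose proof (Hmono (i-1) i ltac:(lia)).
    apply (Hnb (phi (i-1))); [lia|apply Hfix].
  - destruct (Z.eq_dec j (i+1)); [right; subst; auto|].
    exfalso. pose proof (Hmono (i+1) j ltac:(lia)). pose proof (Hmono i (i+1) ltac:(lia)).
    apply (Hnb (phi (i+1))); [lia|apply Hfix].
Qed.

Lemma ind_up (P : Z -> Prop) j0 : P j0 -> (forall i, P (i-1) -> P i) -> forall i, j0 <= i -> P i.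
Proof.
  intros H0 HS. assert (forall n : nat, P (j0 + Z.of_nat n)).
  { induction n; [simpl; rewrite Z.add_0_r; auto|].
    apply HS. replace (j0 + Z.of_nat (S n) - 1) with (j0 + Z.of_nat n) by lia; auto. }
  intros i Hi. specialize (H (Z.to_nat (i - j0))). rewrite Z2Nat.id in H by lia.
  replace i with (j0 + (i - j0)) by lia. auto.
Qed.

Lemma ind_down (P : Z -> Prop) j0 : P j0 -> (forall i, P (i+1) -> P i) -> forall i, i <= j0 -> P i.
Proof.
  intros H0 HS. assert (forall n : nat, P (j0 - Z.of_nat n)).
  { induction n; [simpl; rewrite Z.sub_0_r; auto|].
    apply HS. replace (j0 - Z.of_nat (S n) + 1) with (j0 - Z.of_nat n) by lia; auto. }
  intros i Hi. specialize (H (Z.to_nat (j0 - i))). rewrite Z2Nat.id in H by lia.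
  replace i with (j0 - (j0 - i)) by lia. auto.
Qed.

Lemma main_phi z m phi : in_F_Z z -> F_data (I_map z) m phi ->
  forall i, z (phi i) = phi (Theta i).
Proof.
  intros HF HD.
  pose proof (step z m phi HF HD) as Hst.
  pose proof HD as [Hm [Hsupp [Hmono [Hfix [Hsurj H0]]]]].
  pose proof (phi_inj phi Hmono) as Hinj.
  pose proof (F_inv z HF) as Hinv.
  destruct (F_far z HF) as [N HN].
  set (j0 := -2 * (Z.abs m + Z.abs N + 2)).
  assert (Hneg : forall j, j <= 0 -> phi j = m + j).
  { intros j Hj. pose proof (phi_neg _ _ _ HD (Z.to_nat (- j))).
    rewrite Z2Nat.id in H by lia. replace j with (- - j) by lia. rewrite H. lia. }
  assert (Ej0 : Z.even j0 = true).
  { apply Z.even_spec. exists (- (Z.abs m + Z.abs N + 2)). unfold j0; lia. }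
  assert (Base : z (phi j0) = phi (Theta j0)).
  { rewrite (Theta_even _ Ej0), Hneg, Hneg by (unfold j0; lia).
    rewrite HN by (unfold j0; lia). rewrite Theta_even; [lia|].
    rewrite Z.even_add, Hm, Ej0. reflexivity. }
  intros i. destruct (Z.le_gt_cases j0 i).
  - revert i H. apply (ind_up (fun i => z (phi i) = phi (Theta i)) j0); auto. intros i IH.
    destruct (Z.even i) eqn:E.
    + rewrite Theta_odd in IH by (rewrite even_pred', E; reflexivity).
      replace (i - 1 + 1) with i in IH by lia.
      rewrite <- IH, Hinv, Theta_even by auto. reflexivity.
    + rewrite Theta_even in IH by (rewrite even_pred', E; reflexivity).
      rewrite Theta_odd by auto.
      destruct (Hst i) as [h|h]; auto. exfalso.
      rewrite <- h, Hinv in IH. apply Hinj in IH. lia.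
  - apply (ind_down (fun i => z (phi i) = phi (Theta i)) j0); [auto| |lia]. clear H i. intros i IH.
    destruct (Z.even i) eqn:E.
    + rewrite Theta_odd in IH by (rewrite even_succ', E; reflexivity).
      rewrite Theta_even by auto.
      destruct (Hst i) as [h|h]; auto. exfalso.
      rewrite <- h, Hinv in IH. apply Hinj in IH. lia.
    + rewrite Theta_even in IH by (rewrite even_succ', E; reflexivity).
      replace (i + 1 - 1) with i in IH by lia.
      rewrite <- IH, Hinv, Theta_odd by auto. reflexivity.
Qed.

Theorem proposition3p7 :
  forall z : Z -> Z, in_F_Z z ->
  forall (m : Z) (phi : Z -> Z), F_data (I_map z) m phi ->
    F_spec (I_map z) phi z /\
    (forall z' : Z -> Z, F_spec (I_map z) phi z' -> z' = z).
Proof.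
  intros z HF m phi HD.
  assert (Hsup : forall i, I_map z i <> i -> z i = I_map z i).
  { intros i. unfold I_map. destruct crossing; auto. intros []; auto. }
  pose proof (main_phi z m phi HF HD) as Hm.
  split.
  - split; [auto|split; auto].
  - intros z' [_ [H1 H2]]. apply functional_extensionality. intros x.
    destruct (Z.eq_dec (I_map z x) x) as [e|e].
    + destruct HD as [_ [_ [_ [_ [Hsurj _]]]]]. destruct (Hsurj _ e) as [j <-].
      rewrite H2, Hm. reflexivity.
    + rewrite H1, Hsup; auto.
Qed.
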